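(* Let $G$ be a graph with $n$ nodes and graph Laplacian $\mathbf{L}$, and let $\mathbf{P},\mathbf{Q}\in\mathbb{R}^{n\times d}$. Then the matrix $[\mathbf{P}\ \mathbf{Q}]\in\mathbb{R}^{n\times 2d}$ (column-wise concatenation) is node- and adjacency-identifying if $\mathbf{L}=\mathbf{P}\mathbf{Q}^T$.
   Context: Graphs are finite, undirected, without self-loops and without isolated nodes; $\mathbf{L}=\mathbf{D}-\mathbf{A}(G)$ with $\mathbf{D}$ the degree matrix and $\mathbf{A}(G)$ the adjacency matrix; $d_k>0$ is a fixed constant. A matrix $\mathbf{R}\in\mathbb{R}^{n\times e}$ is node-identifying if there exist $\mathbf{W}^Q,\mathbf{W}^K$ (with $e$ rows) such that $\tilde{\mathbf{R}}=\frac{1}{\sqrt{d_k}}\mathbf{R}\mathbf{W}^Q(\mathbf{R}\mathbf{W}^K)^T$ satisfies $\tilde{\mathbf{R}}_{ij}=\max_k\tilde{\mathbf{R}}_{ik}\iff i=j$; adjacency-identifying if for some (possibly different) such matrices $\tilde{\mathbf{R}}_{ij}=\max_k\tilde{\mathbf{R}}_{ik}\iff\mathbf{A}(G)_{ij}=1$. *)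

(* Defs.v *)
From HB Require Import structures.
From mathcomp Require Import all_boot all_order all_algebra.
Set Implicit Arguments. Unset Strict Implicit. Unset Printing Implicit Defensive.
Import Order.TTheory GRing.Theory Num.Theory.
Local Open Scope ring_scope.

Definition simple_graph (n : nat) (e : rel 'I_n) : Prop :=
  [/\ symmetric e, irreflexive e & forall i : 'I_n, exists j, e i j].

Definition adjmx (R : pzRingType) (n : nat) (e : rel 'I_n) : 'M[R]_n :=
  \matrix_(i, j) (e i j)%:R.

Definition degmx (R : pzRingType) (n : nat) (e : rel 'I_n) : 'M[R]_n :=
  \matrix_(i, j) (if i == j then #|[set k | e i k]|%:R else 0).

Definition laplacian (R : pzRingType) (n : nat) (e : rel 'I_n) : 'M[R]_n :=
  degmx R e - adjmx R e.

Definition attn_scores (R : rcfType) (dk : R) (n e m : nat)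
  (X : 'M[R]_(n, e)) (WQ WK : 'M[R]_(e, m)) : 'M[R]_n :=
  (Num.sqrt dk)^-1 *: ((X *m WQ) *m (X *m WK)^T).

Definition is_row_max (R : numDomainType) (n : nat) (M : 'M[R]_n) (i j : 'I_n) : Prop :=
  forall k : 'I_n, M i k <= M i j.

Definition node_identifying (R : rcfType) (dk : R) (n e : nat) (X : 'M[R]_(n, e)) : Prop :=
  exists m : nat, exists WQ WK : 'M[R]_(e, m),
    forall i j : 'I_n, is_row_max (attn_scores dk X WQ WK) i j <-> i = j.

Definition adjacency_identifying (R : rcfType) (dk : R) (n e : nat)
  (G : rel 'I_n) (X : 'M[R]_(n, e)) : Prop :=
  exists m : nat, exists WQ WK : 'M[R]_(e, m),
    forall i j : 'I_n, is_row_max (attn_scores dk X WQ WK) i j <-> adjmx R G i j = 1.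

(* Main.v *)
Require Import Defs.
From HB Require Import structures.
From mathcomp Require Import all_boot all_order all_algebra.
From mathcomp Require Import lra.
Import Order.TTheory GRing.Theory Num.Theory.
Local Open Scope ring_scope.

Lemma rowmax_scale (R : rcfType) n (c : R) (M : 'M[R]_n) i j :
  0 < c -> is_row_max (c *: M) i j <-> is_row_max M i j.
Proof.
move=> c0; split=> H k; have := H k; rewrite ?mxE.
  by rewrite ler_pM2l.
by move=> h; rewrite ?mxE ler_pM2l.
Qed.

Lemma lapE (R : rcfType) n (G : rel 'I_n) i j : irreflexive G ->
  laplacian R G i j = if i == j then #|[set k | G i k]|%:R else - (G i j)%:R.
Proof.
move=> irr; rewrite /laplacian !mxE; case: eqVneq => [->|_].
  by rewrite irr subr0.
by rewrite sub0r.
Qed.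

Lemma deg_pos {R : rcfType} {n} {G : rel 'I_n} {i} : (exists j, G i j) ->
  (1 : R) <= #|[set k | G i k]|%:R.
Proof.
case=> j Hj; rewrite ler1n; apply/card_gt0P; exists j; by rewrite inE.
Qed.

Lemma b_le1 (R : rcfType) (b : bool) : (b%:R : R) <= 1.
Proof. by case: b; rewrite ?ler01. Qed.

Lemma b_ge0 (R : rcfType) (b : bool) : (0 : R) <= b%:R.
Proof. by case: b; rewrite ?ler01. Qed.

Theorem lemmaF8 (R : rcfType) (dk : R) (n d : nat) (G : rel 'I_n)
  (P Q : 'M[R]_(n, d)) :
  0 < dk -> simple_graph G ->
  laplacian R G = P *m Q^T ->
  node_identifying dk (row_mx P Q) /\ adjacency_identifying dk G (row_mx P Q).
Proof.
move=> dk0 [sym irr noiso] HL.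
have c0 : 0 < (Num.sqrt dk)^-1 by rewrite invr_gt0 sqrtr_gt0.
split.
  exists d, (col_mx 1%:M 0), (col_mx 0 1%:M) => i j.
  rewrite /attn_scores !mul_row_col !mulmx0 !mulmx1 addr0 add0r -HL.
  have H0 := rowmax_scale _ _ _ (laplacian R G) i j c0; apply: (iff_trans H0); split.
    move=> H; apply/eqP; apply/negPn/negP => nij.
    have := H i; rewrite !lapE // eqxx (negbTE nij) => h.
    have := le_trans (deg_pos (noiso i)) h.
    have := b_ge0 R (G i j); rewrite -oppr_le0 => h2 h3.
    by have := le_trans h3 h2; rewrite ler10.
  move=> <- k; rewrite !lapE // eqxx; case: eqVneq => _ //.
  apply: le_trans (ler0n _ _); by rewrite oppr_le0 b_ge0.
exists d, (col_mx 1%:M 0), (col_mx 0 (- 1%:M)) => i j.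
rewrite /attn_scores !mul_row_col !mulmx0 mulmxN !mulmx1 add0r addr0.
rewrite linearN /= mulmxN -HL.
have -> : (Num.sqrt dk)^-1 *: - laplacian R G = (Num.sqrt dk)^-1 *: (- laplacian R G) by [].
have H0 := rowmax_scale _ _ _ (- laplacian R G) i j c0; apply: (iff_trans H0).
have NE k : (- laplacian R G) i k = if i == k then - (#|[set k | G i k]|%:R) else (G i k)%:R.
  by rewrite mxE lapE //; case: eqVneq => _ //; rewrite opprK.
have AE : adjmx R G i j = 1 <-> G i j.
  rewrite mxE; case: (G i j); split=> //; by move/eqP; rewrite eq_sym oner_eq0.
split=> [H|/AE Hij]; first (apply/AE; move: H).
  move=> H; case: (noiso i) => k Hk; have := H k; rewrite !NE.
  have -> : (i == k) = false by apply/negbTE; apply/eqP => ik; rewrite ik irr in Hk.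
  rewrite Hk; case: eqVneq => _.
    move=> h; have := deg_pos (R:=R) (noiso i); move: h.
    rewrite -[1 *- _]/(- (#|[set k | G i k]|%:R)).
    move: (#|[set k | G i k]|%:R : R) => x.
    rewrite (_ : true%:R = 1) // => a b; suff: False by []; lra.
  by case: (G i j) => //; rewrite ler10.
move=> k; rewrite !NE.
have -> : (i == j) = false by apply/negbTE; apply/eqP => ij; rewrite ij irr in Hij.
rewrite Hij; case: eqVneq => _; last exact: b_le1.
apply: le_trans ler01; rewrite oppr_le0; exact: ler0n.
Qed.
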